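(* Let $\mathbb{F}_q$ be a finite field of characteristic $p\geq 5$ and let $A(x)$ be an Alltop function over $\mathbb{F}_q$. For $a,b\in\mathbb{F}_q$ let $\vec{v}_{ab}=\frac{1}{\sqrt{q}}\big(\omega_p^{\mathrm{tr}(A(x+a)+b(x+a))}\big)_{x\in\mathbb{F}_q}\in\mathbb{C}^q$, and let $V_a=\{\vec{v}_{ab}:b\in\mathbb{F}_q\}$. Then the standard basis $E$ of $\mathbb{C}^q$ together with the sets $V_a$, $a\in\mathbb{F}_q$, form a complete set of $q+1$ mutually unbiased bases in $\mathbb{C}^q$.
   Context: $\omega_p=e^{2\pi i/p}$ and $\mathrm{tr}$ is the absolute trace from $\mathbb{F}_q$ to $\mathbb{F}_p$. For $f:\mathbb{F}_q\to\mathbb{F}_q$, $\Delta_{f,a}(x)=f(x+a)-f(x)$; $f$ is planar if $x\mapsto\Delta_{f,a}(x)$ is a bijection for all $a\neq0$; $A$ is an Alltop function if $\Delta_{A,a}$ is planar for all $a\neq0$. Two orthonormal bases $B_1,B_2$ of $\mathbb{C}^d$ are unbiased if $|\langle\vec{x}|\vec{y}\rangle|=1/\sqrt{d}$ for all $\vec{x}\in B_1,\vec{y}\in B_2$ (standard Hermitian inner product); a set of pairwise unbiased orthonormal bases is a set of mutually unbiased bases, and it is complete if it has $d+1$ bases. *)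

(* Defs.v *)
From HB Require Import structures.
From mathcomp Require Import all_boot all_order all_algebra all_field.
Set Implicit Arguments. Unset Strict Implicit. Unset Printing Implicit Defensive.
Import Order.TTheory GRing.Theory Num.Theory.
Local Open Scope ring_scope.

Section Defs.
Variable F : finFieldType.

Definition Delta (f : F -> F) (a : F) : F -> F := fun x => f (x + a) - f x.

Definition planar (f : F -> F) : Prop :=
  forall a : F, a != 0 -> bijective (Delta f a).

Definition alltop (A : F -> F) : Prop :=
  forall a : F, a != 0 -> planar (Delta A a).

(* absolute trace F_q -> F_p, q = p^n, as an element of the prime subfield of F *)
Definition abs_trace (p : nat) (x : F) : F :=
  \sum_(i < logn p #|F|) x ^+ (p ^ i)%N.

(* the trace value read as an integer in {0,..,p-1} (its residue in F_p) *)
Definition trace_nat (p : nat) (x : F) : nat :=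
  index (abs_trace p x) [seq (k%:R : F) | k <- iota 0 p].

(* omega_p = e^{2 pi i / p} : p.-root (-1) = e^{i pi / p} in algC *)
Definition omega (p : nat) : algC := (p.-root (-1)) ^+ 2.

Definition vec := F -> algC.

Definition inner (u v : vec) : algC := \sum_x (u x)^* * v x.

Definition is_onb (B : F -> vec) : Prop :=
  (forall i j, inner (B i) (B j) = (i == j)%:R) /\
  (forall v : vec, exists c : F -> algC, forall x, v x = \sum_i c i * B i x).

Definition unbiased (B1 B2 : F -> vec) : Prop :=
  forall i j, `|inner (B1 i) (B2 j)| = (sqrtC (#|F|%:R))^-1.

Definition mub (I : finType) (Bs : I -> F -> vec) : Prop :=
  (forall k, is_onb (Bs k)) /\ (forall k l, k != l -> unbiased (Bs k) (Bs l)).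

Definition complete_mub (I : finType) (Bs : I -> F -> vec) : Prop :=
  mub Bs /\ #|I| = (#|F|).+1.

Definition std_basis : F -> vec := fun y x => (x == y)%:R.

Definition alltop_vec (p : nat) (A : F -> F) (a b : F) : vec :=
  fun x => (sqrtC (#|F|%:R))^-1 * omega p ^+ trace_nat p (A (x + a) + b * (x + a)).

Definition alltop_family (p : nat) (A : F -> F) : option F -> F -> vec :=
  fun o => match o with None => std_basis | Some a => alltop_vec p A a end.
End Defs.

(* Main.v *)
Require Import Defs.
From HB Require Import structures.
From mathcomp Require Import all_boot all_order all_algebra all_field.
From mathcomp Require Import zify ring.
Import Order.TTheory GRing.Theory Num.Theory.
Local Open Scope ring_scope.

Section Tr.
Variables (F : finFieldType) (p : nat).
Hypothesis hp : p \in [pchar F].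

Lemma pr_p : prime p. Proof. exact: pcharf_prime hp. Qed.

Let n := logn p #|F|.

Lemma cardF : #|F| = (p ^ n)%N.
Proof. exact: (card_pprimeChar hp). Qed.

Lemma n_gt0 : (0 < n)%N.
Proof.
rewrite lt0n; apply/negP => /eqP n0.
have h1 : (#|F| = 1)%N by rewrite cardF n0.
have := subset_leq_card (subsetT [set (0:F); 1]).
by rewrite cardsT cards2 eq_sym oner_neq0 h1.
Qed.

Lemma frobX (x y : F) i : (x + y) ^+ (p ^ i) = x ^+ (p ^ i) + y ^+ (p ^ i).
Proof.
apply: exprDn_pchar; rewrite pnatX (pnatE _ pr_p) hp //.
Qed.

Lemma trD (x y : F) : abs_trace p (x + y) = abs_trace p x + abs_trace p y.
Proof. by rewrite /abs_trace -big_split /=; apply: eq_bigr => i _; rewrite frobX. Qed.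

Lemma trP (x : F) : abs_trace p x ^+ p = abs_trace p x.
Proof.
rewrite -(pFrobenius_autE hp) /abs_trace rmorph_sum /=.
have [m Em] : exists m, n = m.+1 by exists n.-1; rewrite prednK // n_gt0.
rewrite -/n Em big_ord_recr big_ord_recl /=.
rewrite pFrobenius_autE -exprM -expnSr -Em -cardF expf_card expn0 expr1 addrC.
congr (_ + _); apply: eq_bigr => i _.
by rewrite pFrobenius_autE -exprM -expnSr.
Qed.

Lemma natr_inj_lt (k l : nat) : (k < p)%N -> (l < p)%N -> k%:R = l%:R :> F -> k = l.
Proof.
wlog kl : k l / (k <= l)%N.
  move=> W hk hl e; case/orP: (leq_total k l) => h; first exact: W.
  by apply/esym/W => //; apply/esym.
move=> hk hl e.
have hd : (p %| l - k)%N by rewrite (dvdn_pcharf hp) natrB // e subrr.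
have [e0|nz] := eqVneq (l - k)%N 0%N; first by lia.
have := dvdn_leq _ hd; rewrite lt0n nz => /(_ isT); lia.
Qed.

Lemma p_gt1 : (1 < p)%N. Proof. exact: prime_gt1 pr_p. Qed.

Lemma tr_in (x : F) : abs_trace p x \in [seq (k%:R : F) | k <- iota 0 p].
Proof.
apply/negPn/negP => hnot.
have hP : size ('X^p - 'X : {poly F}) = p.+1.
  rewrite size_polyDl ?size_polyXn // size_polyN size_polyX ltnS; exact: p_gt1.
have hroot : forall y : F, y ^+ p = y -> root ('X^p - 'X) y.
  by move=> y hy; rewrite /root !hornerE hy subrr.
have := @max_poly_roots _ ('X^p - 'X) (abs_trace p x :: [seq (k%:R : F) | k <- iota 0 p]).
rewrite -size_poly_eq0 hP /= size_map size_iota ltnn hnot /=.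
rewrite hroot ?trP // map_inj_in_uniq ?iota_uniq; last first.
  by move=> k l; rewrite !mem_iota /= !add0n => hk hl; apply: natr_inj_lt.
have -> : all (root ('X^p - 'X)) [seq (k%:R : F) | k <- iota 0 p].
  by apply/allP => y /mapP [k _ ->]; apply: hroot; rewrite -(pFrobenius_autE hp) pFrobenius_aut_nat.
by move=> /(_ isT isT isT).
Qed.

Lemma tn_lt (x : F) : (trace_nat p x < p)%N.
Proof. by have := tr_in x; rewrite -index_mem size_map size_iota. Qed.

Lemma trE (x : F) : abs_trace p x = (trace_nat p x)%:R.
Proof.
have h := tr_in x; rewrite /trace_nat.
rewrite -{1}(nth_index 0 h) (nth_map 0%N); last by rewrite size_iota tn_lt.
by rewrite nth_iota ?add0n //; apply: tn_lt.
Qed.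

Lemma tnD (x y : F) : trace_nat p (x + y) = ((trace_nat p x + trace_nat p y) %% p)%N.
Proof.
apply: natr_inj_lt; [exact: tn_lt | by rewrite ltn_mod prime_gt0 ?pr_p |].
by rewrite GRing.natr_mod_pchar // -trE trD !trE natrD.
Qed.

Lemma tr_nontriv : exists y : F, abs_trace p y != 0.
Proof.
apply/existsP; rewrite -negb_forall; apply/negP => /forallP h0.
pose P : {poly F} := \sum_(i < n) 'X^(p ^ i).
have [m Em] : exists m, n = m.+1 by exists n.-1; rewrite prednK // n_gt0.
have hsz : (size P <= (p ^ m).+1)%N.
  apply: leq_trans (size_sum _ _ _) _; rewrite big_seq_cond.
  apply/bigmax_leqP_seq => i _ _; rewrite size_polyXn ltnS.
  by rewrite leq_exp2l ?p_gt1 // -ltnS -Em.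
have hcoef : P`_(p ^ m) = 1.
  rewrite /P coef_sum Em big_ord_recr /= coefXn eqxx big1 ?add0r // => i _.
  by rewrite coefXn eqn_exp2l ?p_gt1 // gtn_eqF // ltn_ord.
have Pn0 : P != 0 by apply/eqP => P0; move: hcoef; rewrite P0 coef0 => /eqP; rewrite eq_sym oner_eq0.
have := @max_poly_roots _ P (enum F) Pn0.
rewrite enum_uniq -cardE cardF.
have -> : all (root P) (enum F).
  apply/allP => y _; rewrite /root /P horner_sum.
  under eq_bigr do rewrite hornerXn.
  exact: h0 y.
move=> /(_ isT isT) h.
have h2 : (p ^ m < p ^ n)%N by rewrite Em ltn_exp2l ?p_gt1.
have := leq_trans h hsz; rewrite ltnS leqNgt h2 //.
Qed.

Definition psi (x : F) : algC := omega p ^+ trace_nat p x.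

Lemma p_gt0 : (0 < p)%N. Proof. exact: prime_gt0 pr_p. Qed.

Lemma omega_p : omega p ^+ p = 1.
Proof. by rewrite /omega exprAC rootCK ?p_gt0 // sqrrN expr1n. Qed.

Lemma omega_prim : p.-primitive_root (omega p).
Proof.
have [m hm hmp] := prim_order_exists p_gt0 omega_p.
have := pr_p; case/primeP => _ /(_ m hmp) /orP [/eqP m1|/eqP mp]; last by move: hm; rewrite mp.
exfalso; move: (prim_expr_order hm); rewrite m1 expr1 /omega => /eqP.
rewrite sqrf_eq1 => /orP [/eqP z1|/eqP zm1].
  have := @rootCK algC _ p_gt0 (-1); rewrite /= z1 expr1n => e.
  by have := @ltr10 algC; rewrite e ltrN10.
by have := @rootC_lt0 algC p (-1) p_gt1; rewrite zm1 ltrN10.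
Qed.

Lemma psiD x y : psi (x + y) = psi x * psi y.
Proof. by rewrite /psi tnD expr_mod ?omega_p // exprD. Qed.

Lemma psi_norm x : `|psi x| = 1.
Proof.
have h : `|omega p| = 1.
  apply/eqP; rewrite -(pexpr_eq1 p_gt0) ?normr_ge0 // -normrX omega_p normr1 //.
by rewrite /psi normrX h expr1n.
Qed.

Lemma psi_neq0 x : psi x != 0.
Proof. by rewrite -normr_eq0 psi_norm oner_eq0. Qed.

Lemma psi0 : psi 0 = 1.
Proof.
have := psiD 0 0; rewrite addr0 => e.
by apply: (mulfI (psi_neq0 0)); rewrite mulr1 -e.
Qed.

Lemma psiN x : psi (- x) = (psi x)^*.
Proof.
apply: (mulfI (psi_neq0 x)); rewrite -psiD subrr psi0.
by rewrite -normCK psi_norm expr1n.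
Qed.

Lemma psi_sum0 : \sum_x psi x = 0.
Proof.
have [y hy] := tr_nontriv.
have hy1 : psi y != 1.
  rewrite /psi -(prim_order_dvd omega_prim); apply/negP => /(dvdn_leq _) h.
  have hlt := tn_lt y.
  move: hy; rewrite trE; case: (trace_nat p y) h hlt => [|k] h hlt hy.
    by rewrite eqxx in hy.
  by move: (h isT); rewrite leqNgt hlt.
have e : \sum_x psi x = psi y * \sum_x psi x.
  rewrite mulr_sumr (reindex_inj (addIr y)) /=.
  by apply: eq_bigr => x _; rewrite psiD mulrC.
apply/eqP; move/eqP: e; rewrite -subr_eq0 -{1}[\sum_x psi x]mul1r -mulrBl mulf_eq0.
by rewrite subr_eq0 eq_sym (negbTE hy1).
Qed.

Lemma sum_psi_inj (g : F -> F) : injective g -> \sum_x psi (g x) = 0.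
Proof. by move=> gi; have := psi_sum0; rewrite (reindex_inj gi). Qed.

Lemma char_sum (c d : F) :
  \sum_x psi (c * x + d) = if c == 0 then psi d *+ #|F| else 0.
Proof.
have [->|cn0] := eqVneq c 0.
  by under eq_bigr do rewrite mul0r add0r; rewrite sumr_const.
apply: sum_psi_inj => x y /addIr /(mulfI cn0).
done.
Qed.

Let q : algC := (#|F|)%:R.
Let s : algC := (sqrtC q)^-1.

Lemma q_gt0 : 0 < q.
Proof. by rewrite /q ltr0n cardF expn_gt0 p_gt0. Qed.

Lemma sq_neq0 : sqrtC q != 0.
Proof. by rewrite sqrtC_eq0 gt_eqF // q_gt0. Qed.

Lemma s_ge0 : 0 <= s.
Proof. by rewrite /s invr_ge0 sqrtC_ge0 ltW // q_gt0. Qed.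

Lemma s2q : s ^+ 2 * q = 1.
Proof.
by rewrite /s exprVn sqrtCK mulVf // gt_eqF // q_gt0.
Qed.

Lemma inner_sym (u v : vec F) : inner u v = (inner v u)^*.
Proof.
rewrite /inner rmorph_sum; apply: eq_bigr => x _.
by rewrite rmorphM /= conjCK mulrC.
Qed.

Lemma unbiased_sym (B1 B2 : F -> vec F) : unbiased B1 B2 -> unbiased B2 B1.
Proof. by move=> h i j; rewrite inner_sym norm_conjC h. Qed.

Lemma inner_ss (f g : F -> F) :
  inner (fun x => s * psi (f x)) (fun x => s * psi (g x)) = s ^+ 2 * \sum_x psi (g x - f x).
Proof.
rewrite /inner mulr_sumr; apply: eq_bigr => x _.
by rewrite rmorphM /= geC0_conj ?s_ge0 // -psiN mulrACA -psiD addrC expr2.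
Qed.

Lemma sum_delta (f : F -> algC) x : \sum_i f i * (x == i)%:R = f x.
Proof.
rewrite (bigD1 x) //= eqxx mulr1 big1 ?addr0 // => i hi.
by rewrite eq_sym (negbTE hi) mulr0.
Qed.

Lemma sum_delta2 (f : F -> algC) x : \sum_i f i * (i == x)%:R = f x.
Proof. by under eq_bigr do rewrite eq_sym; rewrite sum_delta. Qed.

Lemma std_onb : is_onb (@std_basis F).
Proof.
split.
  move=> i j; rewrite /inner /std_basis.
  under eq_bigr do rewrite rmorph_nat mulrC.
  by rewrite (sum_delta2 (fun x => (x == j)%:R)).
move=> v; exists v => x; rewrite /std_basis.
rewrite /=. by rewrite sum_delta.
Qed.

Lemma alltop_onb (A : F -> F) a : is_onb (alltop_vec p A a).
Proof.
split.
  move=> b b'; rewrite /alltop_vec.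
  rewrite (inner_ss (fun x => A (x + a) + b * (x + a)) (fun x => A (x + a) + b' * (x + a))).
  have -> : \sum_x psi (A (x + a) + b' * (x + a) - (A (x + a) + b * (x + a)))
      = \sum_x psi ((b' - b) * x + (b' - b) * a).
    by apply: eq_bigr => x _; congr psi; ring.
  rewrite char_sum subr_eq0 eq_sym.
  have [<-|_] := eqVneq b b'; last by rewrite mulr0.
  by rewrite subrr mul0r psi0 -/q mulr1n s2q.
move=> v; exists (fun b => inner (alltop_vec p A a b) v) => x.
rewrite /inner.
under eq_bigr do rewrite mulr_suml.
rewrite exchange_big /=.
have kern : forall y, \sum_b (alltop_vec p A a b y)^* * alltop_vec p A a b x = (x == y)%:R.
  move=> y; rewrite /alltop_vec.
  have -> : \sum_b (s * psi (A (y + a) + b * (y + a)))^* * (s * psi (A (x + a) + b * (x + a)))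
     = s ^+ 2 * \sum_b psi ((x - y) * b + (A (x + a) - A (y + a))).
    rewrite mulr_sumr; apply: eq_bigr => b _.
    rewrite rmorphM /= geC0_conj ?s_ge0 // -psiN mulrACA -psiD expr2; congr (_ * psi _); ring.
  rewrite char_sum subr_eq0.
  have [<-|_] := eqVneq x y; last by rewrite mulr0.
  by rewrite subrr psi0 -/q mulr1n s2q.
rewrite -[v x](sum_delta v x); apply: eq_bigr => y _.
by rewrite -(kern y) mulr_sumr; apply: eq_bigr => b _; rewrite mulrCA mulrA.
Qed.

Lemma std_vs_alltop (A : F -> F) a : unbiased (@std_basis F) (alltop_vec p A a).
Proof.
move=> i j; rewrite /inner /std_basis.
under eq_bigr do rewrite rmorph_nat mulrC.
rewrite (sum_delta2 (fun x => alltop_vec p A a j x)) /alltop_vec.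
by rewrite normrM ger0_norm ?s_ge0 // psi_norm mulr1.
Qed.

Lemma norm_sum_planar (A : F -> F) (a a' b b' : F) : alltop A -> a != a' ->
  `|\sum_x psi (A (x + a') + b' * (x + a') - (A (x + a) + b * (x + a)))| = sqrtC q.
Proof.
move=> hA hne.
pose h := fun x => A (x + a') + b' * (x + a') - (A (x + a) + b * (x + a)).
have eT : \sum_x psi (A (x + a') + b' * (x + a') - (A (x + a) + b * (x + a)))
  = \sum_x psi (h x) by [].
rewrite eT.
have hT : (\sum_x psi (h x)) * (\sum_x psi (h x))^* = q.
  rewrite rmorph_sum /= mulr_suml.
  transitivity (\sum_x \sum_y psi (h x - h y)).
    apply: eq_bigr => x _; rewrite mulr_sumr; apply: eq_bigr => y _.
    by rewrite psiD psiN.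
  rewrite exchange_big /=.
  transitivity (\sum_y \sum_d psi (h (d + y) - h y)).
    by apply: eq_bigr => y _; apply: (reindex_inj (addIr y)).
  rewrite exchange_big /= (bigD1 0) //= [X in _ + X]big1 ?addr0.
    under eq_bigr do rewrite add0r subrr psi0.
    by rewrite sumr_const.
  move=> d dn0.
  have key : forall y, h (d + y) - h y = Delta (Delta A (a' - a)) d (y + a) + (b' - b) * d.
    move=> y; rewrite /h /Delta.
    have E1 : y + a + d + (a' - a) = d + y + a' by ring.
    have E2 : y + a + d = d + y + a by ring.
    have E3 : y + a + (a' - a) = y + a' by ring.
    rewrite E1 E2 E3; ring.
  under eq_bigr do rewrite key.
  have hc : a' - a != 0 by rewrite subr_eq0 eq_sym.
  have [g gK Kg] := hA (a' - a) hc d dn0.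
  apply: sum_psi_inj => y1 y2 /addIr /(can_inj gK) /addIr.
  done.
have nn := normr_ge0 (\sum_x psi (h x)).
by rewrite -(exprCK (isT : (0 < 2)%N) nn) normCK hT.
Qed.

Lemma alltop_cross (A : F -> F) a a' : alltop A -> a != a' ->
  unbiased (alltop_vec p A a) (alltop_vec p A a').
Proof.
move=> hA hne b b'; rewrite /alltop_vec.
rewrite (inner_ss (fun x => A (x + a) + b * (x + a)) (fun x => A (x + a') + b' * (x + a'))).
rewrite normrM (@norm_sum_planar A a a' b b' hA hne) ger0_norm ?exprn_ge0 ?s_ge0 //.
rewrite /s; have := sq_neq0; move: (sqrtC q) => r hr.
by field.
Qed.
End Tr.

Theorem theorem7 (F : finFieldType) (p : nat) (A : F -> F) :
  p \in [pchar F] -> (5 <= p)%N -> alltop A ->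
  complete_mub (alltop_family p A).
Proof.
move=> hp _ hA; split; last by rewrite card_option.
split.
  by case => [a|] /=; [exact: alltop_onb | exact: std_onb].
case=> [a|] [a'|] //= hne.
- by apply: alltop_cross.
- by apply: unbiased_sym; apply: std_vs_alltop.
- by apply: std_vs_alltop.
Qed.
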